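(* Let $\mathcal{C}=\mathsf{CSS}(A,B)$ be a qudit CSS code on $n$ qudits and $H_A$ a parity-check matrix for $A$. If two columns of $H_A$ are identical, then either $\mathcal{C}$ has distance at most $2$, or swapping the two corresponding physical qudits acts as a logical identity on $\mathcal{C}$.
   Context: Let $q$ be a prime power. For classical codes $A,B\subseteq\mathbb{F}_q^n$ with full-row-rank parity-check matrices $H_A,H_B$ satisfying $H_AH_B^T=0$, $\mathsf{CSS}(A,B)$ is the qudit stabilizer code with $X$-type stabilizers the generalized Paulis $X^v$ ($v$ in the row space of $H_A$) and $Z$-type stabilizers $Z^w$ ($w$ in the row space of $H_B$). A logical identity is an operator acting as the identity on the codespace. *)

(* Defs.v *)
From mathcomp Require Import all_boot all_algebra all_fingroup all_field.
Set Implicit Arguments. Unset Strict Implicit. Unset Printing Implicit Defensive.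
Import GRing.Theory.
Local Open Scope ring_scope.

(* Qudit of dimension q = #|F| : computational basis indexed by F.
   An n-qudit state is a function 'rV[F]_n -> algC (amplitudes). *)
Definition state (F : finFieldType) (n : nat) := 'rV[F]_n -> algC.

(* Nontrivial additive character of F (e.g. x |-> omega^{tr x}); the
   generalized Pauli Z is defined through it. *)
Definition nontriv_add_char (F : finFieldType) (chi : F -> algC) :=
  (forall a b : F, chi (a + b) = chi a * chi b) /\ (exists a : F, chi a != 1).

Definition dotv (F : finFieldType) n (u v : 'rV[F]_n) : F := (u *m v^T) 0 0.

(* X^a |x> = |x + a> ;  Z^b |x> = chi(b.x) |x> *)
Definition Xop (F : finFieldType) n (a : 'rV[F]_n) (psi : state F n) : state F n :=
  fun x => psi (x - a).
Definition Zop (F : finFieldType) n (chi : F -> algC) (b : 'rV[F]_n)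
  (psi : state F n) : state F n :=
  fun x => chi (dotv b x) * psi x.

Definition in_codespace (F : finFieldType) n mA mB (chi : F -> algC)
  (HA : 'M[F]_(mA, n)) (HB : 'M[F]_(mB, n)) (psi : state F n) : Prop :=
  (forall v : 'rV[F]_n, (v <= HA)%MS -> Xop v psi = psi) /\
  (forall w : 'rV[F]_n, (w <= HB)%MS -> Zop chi w psi = psi).

Definition pauli_weight (F : finFieldType) n (a b : 'rV[F]_n) : nat :=
  #|[set k : 'I_n | (a 0 k != 0) || (b 0 k != 0)]|.

(* X^a Z^b is a nontrivial logical operator: it preserves the codespace
   but does not act as a scalar (i.e. as the logical identity up to phase). *)
Definition nontrivial_logical (F : finFieldType) n mA mB (chi : F -> algC)
  (HA : 'M[F]_(mA, n)) (HB : 'M[F]_(mB, n)) (a b : 'rV[F]_n) : Prop :=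
  (forall psi, in_codespace chi HA HB psi ->
     in_codespace chi HA HB (Xop a (Zop chi b psi))) /\
  ~ (exists c : algC, forall psi, in_codespace chi HA HB psi ->
        Xop a (Zop chi b psi) = (fun x => c * psi x)).

Definition distance_at_most (F : finFieldType) n mA mB (chi : F -> algC)
  (HA : 'M[F]_(mA, n)) (HB : 'M[F]_(mB, n)) (d : nat) : Prop :=
  exists a b : 'rV[F]_n, (pauli_weight a b <= d)%N /\ nontrivial_logical chi HA HB a b.

Definition swap_op (F : finFieldType) n (i j : 'I_n) (psi : state F n) : state F n :=
  fun x => psi (\row_k x 0 (tperm i j k)).

Definition logical_identity (F : finFieldType) n mA mB (chi : F -> algC)
  (HA : 'M[F]_(mA, n)) (HB : 'M[F]_(mB, n)) (U : state F n -> state F n) : Prop :=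
  forall psi, in_codespace chi HA HB psi -> U psi = psi.

(* Main.v *)
Require Import Defs.
From mathcomp Require Import all_boot all_algebra all_fingroup all_field.
From Stdlib Require Import Classical FunctionalExtensionality.
Set Implicit Arguments. Unset Strict Implicit.
Import GRing.Theory.
Local Open Scope ring_scope.

Lemma dotvE (F : finFieldType) n (i j : 'I_n) t (x : 'rV[F]_n) :
  dotv (t *: (delta_mx 0 i - delta_mx 0 j)) x = t * (x 0 i - x 0 j).
Proof.
by rewrite /dotv -scalemxAl mulmxBl -!rowE !mxE.
Qed.

Lemma dotvD (F : finFieldType) n (w x y : 'rV[F]_n) :
  dotv w (x + y) = dotv w x + dotv w y.
Proof. by rewrite /dotv linearD /= mulmxDr mxE. Qed.

Lemma dotv0 (F : finFieldType) n (x : 'rV[F]_n) : dotv 0 x = 0.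
Proof. by rewrite /dotv mul0mx mxE. Qed.

Lemma dotv_orth (F : finFieldType) n mA mB (HA : 'M[F]_(mA, n)) (HB : 'M[F]_(mB, n))
  v w : HA *m HB^T = 0 -> (v <= HA)%MS -> (w <= HB)%MS -> dotv w v = 0.
Proof.
move=> H /submxP[u ->] /submxP[u' ->].
have E : HB *m HA^T = 0 by rewrite -[HB]trmxK -trmx_mul H trmx0.
by rewrite /dotv trmx_mul -mulmxA (mulmxA HB) E mul0mx mulmx0 mxE.
Qed.

Lemma sub_same (F : finFieldType) n mA (HA : 'M[F]_(mA, n)) (i j : 'I_n) (v : 'rV[F]_n) :
  col i HA = col j HA -> (v <= HA)%MS -> v 0 i = v 0 j.
Proof.
move=> H /submxP[u ->].
have : col i (u *m HA) = col j (u *m HA) by rewrite !colE -!mulmxA -!colE H.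
by move/(congr1 (fun M : 'cV[F]_1 => M 0 0)); rewrite !mxE.
Qed.

Lemma dotvZ (F : finFieldType) n c (w x : 'rV[F]_n) : dotv (c *: w) x = c * dotv w x.
Proof. by rewrite /dotv -scalemxAl mxE. Qed.

Lemma scal_cancel (c p : algC) : c * p = p -> p != 0 -> c = 1.
Proof.
move=> E Hp; have: (c - 1) * p = 0 by rewrite mulrBl E mul1r subrr.
by move/eqP; rewrite mulf_eq0 (negbTE Hp) orbF subr_eq0 => /eqP.
Qed.

Lemma supp (F : finFieldType) n mA mB (HA : 'M[F]_(mA, n)) (HB : 'M[F]_(mB, n))
  chi psi x : nontriv_add_char chi -> in_codespace chi HA HB psi -> psi x != 0 ->
  chi 0 = 1 /\ forall w, (w <= HB)%MS -> dotv w x = 0.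
Proof.
move=> [_ [a Ha]] [_ HZ] Hx; split.
  have := congr1 (fun f => f x) (HZ 0 (sub0mx _ _)).
  by rewrite /Zop dotv0 => /scal_cancel; apply.
move=> w Hw; apply/eqP; apply: contraT => Hu.
have Hw' : ((a / dotv w x) *: w <= HB)%MS by apply: scalemx_sub.
have := congr1 (fun f => f x) (HZ _ Hw').
rewrite /Zop dotvZ divfK // => /scal_cancel/(_ Hx) E.
by rewrite E eqxx in Ha.
Qed.

Theorem lemma3 (F : finFieldType) (n mA mB : nat)
  (HA : 'M[F]_(mA, n)) (HB : 'M[F]_(mB, n)) (chi : F -> algC) (i j : 'I_n) :
  nontriv_add_char chi ->
  row_free HA -> row_free HB -> HA *m HB^T = 0 ->
  i != j -> col i HA = col j HA ->
  distance_at_most chi HA HB 2 \/ logical_identity chi HA HB (swap_op i j).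
Proof.
move=> Hchi _ _ Horth Hij Hcol.
case: (classic (exists x0 : 'rV[F]_n, (forall w, (w <= HB)%MS -> dotv w x0 = 0) /\
          x0 0 i != x0 0 j /\ chi 0 = 1)) => [[x0 [Hx0 [Hne Hc0]]] | HP]; last first.
  right => psi Hpsi; apply: functional_extensionality => x; rewrite /swap_op.
  have [Exij | Nxij] := eqVneq (x 0 i) (x 0 j).
    congr psi; apply/rowP => k; rewrite mxE.
    by case: tpermP => [->|->|//]; rewrite ?Exij.
  have Z1 : psi x = 0.
    apply/eqP; apply: contraT => H; case: (supp Hchi Hpsi H) => C1 C2.
    by case: HP; exists x.
  have Z2 : psi (\row_k x 0 (tperm i j k)) = 0.
    apply/eqP; apply: contraT => H; case: (supp Hchi Hpsi H) => C1 C2.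
    case: HP; exists (\row_k x 0 (tperm i j k)); split => //; split => //.
    by rewrite !mxE tpermL tpermR eq_sym.
  by rewrite Z1 Z2.
left.
case: (Hchi) => Hmul [a Ha].
have Hs : x0 0 i - x0 0 j != 0 by rewrite subr_eq0.
pose b : 'rV[F]_n := (a / (x0 0 i - x0 0 j)) *: (delta_mx 0 i - delta_mx 0 j).
have Hb x : dotv b x = (a / (x0 0 i - x0 0 j)) * (x 0 i - x 0 j) by rewrite dotvE.
have X0 (phi : state F n) : Xop 0 phi = phi.
  by apply: functional_extensionality => x; rewrite /Xop subr0.
exists 0, b; split.
  rewrite /pauli_weight.
  apply: (leq_trans (subset_leq_card (B := [set i; j]) _)); last by rewrite cards2 Hij.
  apply/subsetP => k; rewrite !inE mxE eqxx /= !mxE.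
  case: (k == i); case: (k == j); rewrite ?orbT //=.
  by rewrite oppr0 addr0 mulr0 eqxx.
split.
  move=> psi [HX HZ]; rewrite X0; split.
    move=> v Hv; apply: functional_extensionality => x.
    have := congr1 (fun f => f x) (HX v Hv); rewrite /Xop /Zop => ->.
    rewrite !Hb !mxE (sub_same Hcol Hv); congr (chi (_ * _) * _).
    by rewrite opprB addrA subrK.
  move=> w Hw; apply: functional_extensionality => x.
  have := congr1 (fun f => f x) (HZ w Hw); rewrite /Zop => E.
  by rewrite mulrCA E.
move=> [c Hc].
pose psiy (y : 'rV[F]_n) : state F n := fun x => if (x - y <= HA)%MS then 1 else 0.
have Hpsiy y : (forall w, (w <= HB)%MS -> dotv w y = 0) -> in_codespace chi HA HB (psiy y).
  move=> Hy; split.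
    move=> v Hv; apply: functional_extensionality => x; rewrite /Xop /psiy.
    have -> : x - v - y = (x - y) + (- v) by rewrite addrAC.
    case: ifP => H1; case: ifP => H2 //.
      have := addmx_sub H1 Hv.
      by rewrite addrNK H2.
    have := addmx_sub H2 (_ : (- v <= HA)%MS); rewrite eqmx_opp => /(_ Hv).
    by rewrite H1.
  move=> w Hw; apply: functional_extensionality => x; rewrite /Zop /psiy.
  case: ifP => H; last by rewrite mulr0.
  have -> : x = (x - y) + y by rewrite subrK.
  by rewrite dotvD (Hy w Hw) (dotv_orth Horth H Hw) addr0 Hc0 mulr1.
have Hcy y : (forall w, (w <= HB)%MS -> dotv w y = 0) -> c = chi (dotv b y).
  move=> Hy; have := congr1 (fun f => f y) (Hc _ (Hpsiy y Hy)).
  by rewrite X0 /Zop /psiy subrr sub0mx mulr1 => ->; rewrite mulr1.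
have H0 : forall w, (w <= HB)%MS -> dotv w (0 : 'rV[F]_n) = 0.
  by move=> w _; rewrite /dotv trmx0 mulmx0 mxE.
have := Hcy _ H0; rewrite (Hcy _ Hx0) !Hb !mxE subrr mulr0 divfK // Hc0 => E.
by rewrite E eqxx in Ha.
Qed.
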